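(* Let $A\in\mathbb{R}^{n\times n}$ be symmetric positive definite, $b\in\mathbb{R}^n$, and let the $CD$ method (described in the context) be applied to $Ay=b$ with starting point $y_0\in\mathbb{R}^n$ and real parameters $\gamma_k\neq 0$ for all $k\ge 0$. If the directions $p_0,p_1,\dots,p_k$ ($k\ge 0$) are generated by the method, then they are mutually conjugate, i.e. $p_i^TAp_j=0$ for all $0\le i\neq j\le k$.
   Context: The $CD$ method for solving $Ay=b$, with $A$ symmetric positive definite, starting point $y_0\in\mathbb{R}^n$ and nonzero real parameters $\gamma_0,\gamma_1,\dots$, is the following iteration (all norms Euclidean). Set $r_0=b-Ay_0$; if $r_0=0$ stop; set $p_0=r_0$. For $k=0,1,2,\dots$: compute $a_k=\dfrac{r_k^Tp_k}{p_k^TAp_k}$, $y_{k+1}=y_k+a_kp_k$, $r_{k+1}=r_k-a_kAp_k$; if $r_{k+1}=0$ stop; otherwise set $\sigma_k=\gamma_k\dfrac{\|Ap_k\|^2}{p_k^TAp_k}$ and, if $k=0$, $p_1=\gamma_0Ap_0-\sigma_0p_0$, while if $k\ge1$, $\omega_k=\gamma_k\dfrac{(Ap_k)^T(Ap_{k-1})}{p_{k-1}^TAp_{k-1}}$ and $p_{k+1}=\gamma_kAp_k-\sigma_kp_k-\omega_kp_{k-1}$. *)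

(* Defs.v *)
From HB Require Import structures.
From mathcomp Require Import all_boot all_order all_algebra.
Set Implicit Arguments. Unset Strict Implicit. Unset Printing Implicit Defensive.
Import Order.TTheory GRing.Theory Num.Theory.
Local Open Scope ring_scope.

Definition dot (R : realFieldType) (n : nat) (u v : 'cV[R]_n) : R := (u^T *m v) 0 0.

Definition spd (R : realFieldType) (n : nat) (A : 'M[R]_n) : Prop :=
  A^T = A /\ (forall x : 'cV[R]_n, x != 0 -> 0 < dot x (A *m x)).

(* State of the CD iteration at step k: (y_k, r_k, p_k, p_{k-1}),
   with p_{-1} := 0 (never used).  Divisions are MathComp's total ones;
   they are only meaningful while the method has not stopped. *)
Fixpoint cd_state (R : realFieldType) (n : nat) (A : 'M[R]_n) (b y0 : 'cV[R]_n)
    (gam : nat -> R) (k : nat) : 'cV[R]_n * 'cV[R]_n * 'cV[R]_n * 'cV[R]_n :=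
  match k with
  | 0 => let r0 := b - A *m y0 in (y0, r0, r0, 0)
  | k'.+1 =>
    let: (y, r, p, pp) := cd_state A b y0 gam k' in
    let a := dot r p / dot p (A *m p) in
    let y' := y + a *: p in
    let r' := r - a *: (A *m p) in
    let s := gam k' * dot (A *m p) (A *m p) / dot p (A *m p) in
    let p' :=
      if k' is 0 then gam 0 *: (A *m p) - s *: p
      else
        let w := gam k' * dot (A *m p) (A *m pp) / dot pp (A *m pp) in
        gam k' *: (A *m p) - s *: p - w *: pp in
    (y', r', p', p)
  end.

Definition cd_y R n A b y0 gam k := (@cd_state R n A b y0 gam k).1.1.1.
Definition cd_r R n A b y0 gam k := (@cd_state R n A b y0 gam k).1.1.2.
Definition cd_p R n A b y0 gam k := (@cd_state R n A b y0 gam k).1.2.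

(* Main.v *)
Require Import Defs.
From mathcomp Require Import all_boot all_order all_algebra.
Import GRing.Theory Num.Theory.
Local Open Scope ring_scope.

Section Aux.
Variables (R : realFieldType) (n : nat).
Implicit Types u v w : 'cV[R]_n.

Lemma dotC u v : dot u v = dot v u.
Proof.
rewrite /dot; have -> : v^T *m u = (u^T *m v)^T by rewrite trmx_mul trmxK.
by rewrite [RHS]mxE.
Qed.

Lemma dotDr u v w : dot u (v + w) = dot u v + dot u w.
Proof. by rewrite /dot mulmxDr mxE. Qed.

Lemma dotNr u v : dot u (- v) = - dot u v.
Proof. by rewrite /dot mulmxN mxE. Qed.

Lemma dotBr u v w : dot u (v - w) = dot u v - dot u w.
Proof. by rewrite dotDr dotNr. Qed.

Lemma dotZr u v (a : R) : dot u (a *: v) = a * dot u v.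
Proof. by rewrite /dot -scalemxAr mxE. Qed.

Lemma dot0r u : dot u 0 = 0.
Proof. by rewrite /dot mulmx0 mxE. Qed.

Lemma dotAs (A : 'M[R]_n) u v : A^T = A -> dot u (A *m v) = dot (A *m u) v.
Proof. by move=> hA; rewrite /dot trmx_mul hA mulmxA. Qed.
End Aux.

Definition cd_q {R n} A b y0 gam k := (@cd_state R n A b y0 gam k).2.

Lemma cd_q0 (R : realFieldType) n (A : 'M[R]_n) b y0 gam : cd_q A b y0 gam 0 = 0.
Proof. by []. Qed.

Lemma cd_qS (R : realFieldType) n (A : 'M[R]_n) b y0 gam k :
  cd_q A b y0 gam k.+1 = cd_p A b y0 gam k.
Proof.
rewrite /cd_q /cd_p /=; by case: (cd_state A b y0 gam k) => [[[y r] p] pp].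
Qed.

Lemma cd_pS (R : realFieldType) n (A : 'M[R]_n) b y0 gam k :
  let P := cd_p A b y0 gam k in let Q := cd_q A b y0 gam k in
  cd_p A b y0 gam k.+1 =
    gam k *: (A *m P) - (gam k * dot (A *m P) (A *m P) / dot P (A *m P)) *: P
    - (if k is 0 then 0 else gam k * dot (A *m P) (A *m Q) / dot Q (A *m Q)) *: Q.
Proof.
rewrite /cd_q /cd_p /=.
case: (cd_state A b y0 gam k) => [[[y r] p] pp] /=.
by case: k => [|k] //=; rewrite scale0r subr0.
Qed.

Theorem theorem1 (R : realFieldType) (n : nat) (A : 'M[R]_n) (b y0 : 'cV[R]_n)
    (gam : nat -> R) (k : nat) :
  spd A ->
  (forall j : nat, gam j != 0) ->
  (forall j : nat, (j <= k)%N -> cd_r A b y0 gam j != 0) ->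
  forall i j : nat, (i <= k)%N -> (j <= k)%N -> i != j ->
    dot (cd_p A b y0 gam i) (A *m cd_p A b y0 gam j) = 0.
Proof.
move=> [hA hpd] hg _.
set P := cd_p A b y0 gam. set Q := cd_q A b y0 gam.
set B := fun u v : 'cV[R]_n => dot u (A *m v).
have BC : forall u v, B u v = B v u.
  by move=> u v; rewrite /B dotAs // dotC.
have key2 : forall (p : 'cV[R]_n) (c x : R), (p = 0 -> x = 0) ->
   c * x - c * x / B p p * B p p = 0.
  move=> p c x hx; have [p0|p0] := eqVneq p 0.
    by rewrite (hx p0) mulr0 !mul0r subrr.
  have := hpd p p0; rewrite -/(B p p) => hp.
  by rewrite mulfVK ?subrr // lt0r_neq0.
have expand : forall X k, B X (P k.+1) =
    gam k * dot (A *m X) (A *m P k)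
    - (gam k * dot (A *m P k) (A *m P k) / dot (P k) (A *m P k)) * B X (P k)
    - (if k is 0 then 0 else gam k * dot (A *m P k) (A *m Q k) / dot (Q k) (A *m Q k))
       * B X (Q k).
  move=> X k'; rewrite /B /P cd_pS -/P -/Q !mulmxBr !dotBr -!scalemxAr !dotZr.
  by rewrite (@dotAs R n A X (A *m P k') hA).
suff main : forall m i j, (i < j)%N -> (j <= m)%N -> B (P i) (P j) = 0.
  move=> i j _ _ ij; rewrite -/(B _ _).
  case: (ltngtP i j) ij => // [lt|gt] _; first exact: (main j).
  by rewrite BC; apply: (main i).
elim=> [|m IH] i j lij; first by rewrite leqn0 => /eqP jm; rewrite jm in lij.
rewrite leq_eqVlt ltnS => /orP[/eqP jm | ]; last exact: IH.
subst j.
have hQ : forall l, (l <= m)%N -> B (Q l) (P m) = 0.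
  case=> [|l] lm; first by rewrite /B /Q cd_q0 /dot trmx0 mul0mx mxE.
  by rewrite /Q cd_qS; apply: (IH); [exact: lm | exact: leqnn].
rewrite expand.
have [eim|nim] := eqVneq i m.
  subst i; rewrite [B (P m) (Q m)]BC hQ // mulr0 subr0.
  apply: key2 => ->; by rewrite mulmx0 dot0r.
have lim : (i < m)%N by rewrite ltn_neqAle nim -ltnS.
rewrite (IH i m) // mulr0 subr0.
case: m IH hQ expand lim nim {lij} => [|m] IH hQ expand lim nim //.
rewrite /Q cd_qS -/P.
have [eim|nim1] := eqVneq i m.
  subst i; rewrite [dot (A *m P m) _]dotC.
  apply: key2 => ->; by rewrite mulmx0 dot0r.
have lim1 : (i < m)%N by rewrite ltn_neqAle nim1 -ltnS.
rewrite (IH i m) // ?mulr0 ?subr0.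
have h := expand (P m.+1) i.
rewrite BC (IH i.+1 m.+1) // ?[B (P m.+1) (P i)]BC ?(IH i m.+1) // in h.
rewrite [B (P m.+1) (Q i)]BC hQ in h; last by apply: ltnW; apply: ltnW.
rewrite !mulr0 !subr0 in h.
have : gam i * dot (A *m P m.+1) (A *m P i) = 0 by rewrite -h.
rewrite dotC => /eqP; rewrite mulf_eq0 (negbTE (hg i)) /= => /eqP ->.
by rewrite mulr0.
Qed.
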